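(* Suppose a language model produces a raw (pre-watermark) probability vector $p\in(0,1)^N$. Let $\gamma\in(0,1)$ with $\gamma N$ an integer, and randomly (uniformly) partition the indices $\{1,\dots,N\}$ into a green list $G$ of size $\gamma N$ and a red list $R$ of size $(1-\gamma)N$. Let $\delta>0$, $\alpha=\exp(\delta)$, and form the watermarked distribution by boosting the green list logits by $\delta$, i.e. $$\hat p_k=\frac{\alpha^{\mathbf{1}[k\in G]}\,p_k}{\sum_{i\in R}p_i+\alpha\sum_{i\in G}p_i}.$$ Sample a token index $k$ from the watermarked distribution. Then the probability (over the random partition and the sampling) that the token lies in the green list satisfies $$\mathbb{P}[k\in G]\ge \frac{\gamma\alpha}{1+(\alpha-1)\gamma}\,S\!\left(p,\frac{(1-\gamma)(\alpha-1)}{1+(\alpha-1)\gamma}\right).$$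
   Context: Spike entropy: for a discrete probability vector $p=(p_k)$ and a scalar $z$, the spike entropy of $p$ with modulus $z$ is $S(p,z)=\sum_k \frac{p_k}{1+z p_k}$. *)

(* Defs.v *)
From HB Require Import structures.
From mathcomp Require Import all_boot all_order all_algebra.
From mathcomp Require Import reals.
From mathcomp Require Import sequences exp.
Set Implicit Arguments. Unset Strict Implicit. Unset Printing Implicit Defensive.
Import Order.TTheory GRing.Theory Num.Theory.
Local Open Scope ring_scope.

Definition spike_entropy (R : realType) (N : nat) (p : 'I_N -> R) (z : R) : R :=
  \sum_(k < N) p k / (1 + z * p k).

Definition wm_dist (R : realType) (N : nat) (p : 'I_N -> R) (alpha : R)
  (G : {set 'I_N}) (k : 'I_N) : R :=
  (if k \in G then alpha else 1) * p k /
  (\sum_(i < N | i \notin G) p i + alpha * \sum_(i in G) p i).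

(* Probability that the sampled token is green, when G is uniform among
   subsets of size m and k is sampled from wm_dist p alpha G. *)
Definition green_prob (R : realType) (N m : nat) (p : 'I_N -> R) (alpha : R) : R :=
  (\sum_(G : {set 'I_N} | #|G| == m) \sum_(k in G) wm_dist p alpha G k)
  / (#|[set G : {set 'I_N} | #|G| == m]|)%:R.

(* Main.v *)
Require Import Defs.
From HB Require Import structures.
From mathcomp Require Import all_boot all_order all_algebra.
From mathcomp Require Import reals.
From mathcomp Require Import sequences exp.
From mathcomp Require Import lra ring.
From mathcomp Require Import fingroup perm.
Import Order.TTheory GRing.Theory Num.Theory.
Local Open Scope ring_scope.

Lemma sum_perm (R : realType) (N m : nat) (F : {set 'I_N} -> R) (s : {perm 'I_N}) :
  \sum_(G : {set 'I_N} | #|G| == m) F G = \sum_(G : {set 'I_N} | #|G| == m) F (s @: G).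
Proof.
rewrite (reindex_inj (h := fun G : {set 'I_N} => s @: G)); last exact: imset_inj (@perm_inj _ s).
by apply: eq_bigl => G /=; rewrite card_imset //; exact: perm_inj.
Qed.

Definition nk (R : realType) (N m : nat) (k : 'I_N) : R :=
  \sum_(G : {set 'I_N} | #|G| == m) (k \in G)%:R.
Definition ck (R : realType) (N m : nat) (k i : 'I_N) : R :=
  \sum_(G : {set 'I_N} | #|G| == m) ((k \in G) && (i \in G))%:R.

Arguments nk R {N} m k.
Arguments ck R {N} m k i.

Lemma nk_const (R : realType) N m (k j : 'I_N) : nk R m k = nk R m j.
Proof.
rewrite /nk; apply: etrans (sum_perm _ _ _ _ (tperm k j)) _; apply: eq_bigr => G _.
have := mem_imset G j (@perm_inj _ (tperm k j)); rewrite tpermR => -> //.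
Qed.

Lemma ck_const (R : realType) N m (k i j : 'I_N) : i != k -> j != k ->
  ck R m k i = ck R m k j.
Proof.
move=> ik jk; rewrite /ck; apply: etrans (sum_perm _ _ _ _ (tperm i j)) _; apply: eq_bigr => G _.
have := mem_imset G j (@perm_inj _ (tperm i j)); rewrite tpermR => ->.
have := mem_imset G k (@perm_inj _ (tperm i j)); rewrite tpermD // => -> //.
Qed.

Lemma sum_in (R : realType) N (G : {set 'I_N}) :
  \sum_(k < N) ((k \in G)%:R : R) = #|G|%:R.
Proof.
rewrite (eq_bigr (fun k => if k \in G then 1 else 0)); last by move=> k _; case: (k \in G).
by rewrite -big_mkcond /= sumr_const.
Qed.

Lemma sum_nk (R : realType) N m (k : 'I_N) :
  N%:R * nk R m k = m%:R * (#|[set G : {set 'I_N} | #|G| == m]|)%:R.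
Proof.
have -> : N%:R * nk R m k = \sum_(j < N) nk R m j.
  by rewrite (eq_bigr (fun _ => nk R m k)) ?sumr_const ?card_ord ?mulr_natl // => j _; apply: nk_const.
rewrite /nk exchange_big /=.
rewrite (eq_bigr (fun _ => m%:R)); last by move=> G /eqP hG; rewrite sum_in hG.
by rewrite sumr_const cardsE mulr_natr.
Qed.

Lemma sum_ck (R : realType) N m (k i : 'I_N) : i != k ->
  N.-1%:R * ck R m k i = m%:R * nk R m k - nk R m k.
Proof.
move=> ik.
have h1 : \sum_(j < N) ck R m k j = m%:R * nk R m k.
  rewrite /ck /nk exchange_big /= mulr_sumr; apply: eq_bigr => G /eqP hG.
  rewrite -hG -sum_in mulr_suml; apply: eq_bigr => j _.
  by case: (k \in G); case: (j \in G); rewrite /= ?mulr1 ?mulr0 ?mul1r ?mul0r.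
have ckk : ck R m k k = nk R m k by rewrite /ck /nk; apply: eq_bigr => G _; rewrite andbb.
rewrite -h1 (bigD1 k) //= ckk [nk R m k + _]addrC addrK.
rewrite (eq_bigr (fun _ => ck R m k i)); last by move=> j jk; apply: ck_const.
by rewrite sumr_const cardC1 card_ord mulr_natl.
Qed.

Theorem lemmaE1 (R : realType) (N m : nat) (p : 'I_N -> R)
  (hp : forall k, 0 < p k < 1) (hsum : \sum_(k < N) p k = 1)
  (gamma : R) (hg : 0 < gamma < 1) (hm : gamma * N%:R = m%:R)
  (delta : R) (hd : 0 < delta) :
  let alpha := expR delta in
  green_prob m p alpha >=
    gamma * alpha / (1 + (alpha - 1) * gamma) *
    spike_entropy p ((1 - gamma) * (alpha - 1) / (1 + (alpha - 1) * gamma)).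
Proof.
cbv zeta.
move: (pexpR_gt1 hd); move: (expR delta) => alpha ha1.
have hc : 0 < alpha - 1 by rewrite subr_gt0.
have [hg0 hg1] := andP hg.
have hp0 : forall k, 0 <= p k by move=> k; have /andP[/ltW] := hp k.
have hN0 : (0 < N)%N.
  case: (posnP N) => // N0; subst N.
  by move: hsum; rewrite big_ord0 => /eqP; rewrite eq_sym oner_eq0.
have hNR : 0 < N%:R :> R by rewrite ltr0n.
have hmN : (m < N)%N.
  by rewrite -(ltr_nat R) -hm; rewrite -{2}(mul1r N%:R) ltr_pM2r.
have hm0 : (0 < m)%N by rewrite -(ltr_nat R) -hm mulr_gt0.
set T := (#|[set G : {set 'I_N} | #|G| == m]|)%:R : R.
have hT : 0 < T by rewrite /T card_draws card_ord ltr0n bin_gt0 ltnW.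
have nkE : forall k : 'I_N, nk R m k = gamma * T.
  move=> k; rewrite -(mulKf (lt0r_neq0 hNR) (nk R m k)) sum_nk -hm.
  by field; exact: lt0r_neq0.
have hN1 : 0 < N.-1%:R :> R.
  by rewrite ltr0n -subn1 subn_gt0; exact: leq_ltn_trans hm0 hmN.
have ckle : forall k i : 'I_N, i != k -> ck R m k i <= gamma * nk R m k.
  move=> k i ik.
  have e : N.-1%:R * (gamma * nk R m k - ck R m k i) = (1 - gamma) * nk R m k.
    rewrite mulrBr sum_ck // -subn1 natrB // -hm; ring.
  rewrite -subr_ge0 -(pmulr_rge0 _ hN1) e mulr_ge0 //; first by lra.
  by rewrite nkE mulr_ge0 // ltW.
pose P (G : {set 'I_N}) := \sum_(i in G) p i.
pose D G := 1 + (alpha - 1) * P G.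
have hD : forall G : {set 'I_N}, \sum_(i < N | i \notin G) p i + alpha * \sum_(i in G) p i = D G.
  move=> G; rewrite /D /P; move: hsum; rewrite (bigID (fun i => i \in G)) /= => hs; lra.
have hD0 : forall G : {set 'I_N}, 0 < D G.
  move=> G; rewrite /D; have : 0 <= P G by apply: sumr_ge0.
  move=> h; have := mulr_ge0 (ltW hc) h; lra.
pose v k := 1 + (alpha - 1) * (gamma + (1 - gamma) * p k).
have hv : forall k : 'I_N, 0 < v k.
  move=> k; rewrite /v; have := hp k => /andP[h1 h2].
  have : 0 <= gamma + (1 - gamma) * p k.
    have h1g : 0 <= 1 - gamma by lra.
    by rewrite addr_ge0 ?mulr_ge0 // ltW.
  move=> h; have := mulr_ge0 (ltW hc) h; lra.
have key : forall k : 'I_N, gamma * T / v k <=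
    \sum_(G : {set 'I_N} | #|G| == m) (k \in G)%:R / D G.
  move=> k.
  have S1 : \sum_(G : {set 'I_N} | #|G| == m) (k \in G)%:R * P G
            = \sum_(i < N) ck R m k i * p i.
    rewrite (eq_bigr (fun G : {set 'I_N} => \sum_(i < N) ((k \in G) && (i \in G))%:R * p i)); last first.
      move=> G _; rewrite /P big_mkcond mulr_sumr /=; apply: eq_bigr => i _.
      by case: (k \in G); case: (i \in G); rewrite /= ?mul1r ?mul0r.
    by rewrite exchange_big /=; apply: eq_bigr => i _; rewrite /ck mulr_suml.
  have S2 : \sum_(i < N) ck R m k i * p i <= nk R m k * (gamma + (1 - gamma) * p k).
    rewrite (bigD1 k) //=.
    have ckk : ck R m k k = nk R m k by rewrite /ck /nk; apply: eq_bigr => G _; rewrite andbb.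
    have h1 : \sum_(i < N | i != k) ck R m k i * p i <= \sum_(i < N | i != k) gamma * nk R m k * p i.
      by apply: ler_sum => i ik; apply: ler_wpM2r => //; exact: ckle.
    rewrite -mulr_sumr in h1.
    have h2 : \sum_(i < N | i != k) p i = 1 - p k.
      by move: hsum; rewrite (bigD1 k) //= => hs; lra.
    rewrite h2 in h1; rewrite ckk; lra.
  have S3 : \sum_(G : {set 'I_N} | #|G| == m) (k \in G)%:R * D G <= nk R m k * v k.
    have e : \sum_(G : {set 'I_N} | #|G| == m) (k \in G)%:R * D G = nk R m k + (alpha - 1) *
      \sum_(G : {set 'I_N} | #|G| == m) (k \in G)%:R * P G.
      by rewrite /nk mulr_sumr -big_split /=; apply: eq_bigr => G _; rewrite /D; ring.
    rewrite e S1 /v; have := ler_wpM2l (ltW hc) S2; lra.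
  have S4 : \sum_(G : {set 'I_N} | #|G| == m) (k \in G)%:R * (2 / v k - D G / v k ^+ 2) <=
      \sum_(G : {set 'I_N} | #|G| == m) (k \in G)%:R / D G.
    apply: ler_sum => G _; case: (k \in G); rewrite /= ?mul0r ?mul1r //.
    have hvk := hv k; have hDG := hD0 G.
    rewrite -subr_ge0.
    have -> : (D G)^-1 - (2 / v k - D G / v k ^+ 2) = (v k - D G) ^+ 2 / (D G * v k ^+ 2).
      by field; rewrite ?mulf_neq0 ?expf_neq0 ?lt0r_neq0.
    by rewrite divr_ge0 ?sqr_ge0 // ltW // mulr_gt0 // exprn_gt0.
  have e2 : \sum_(G : {set 'I_N} | #|G| == m) (k \in G)%:R * (2 / v k - D G / v k ^+ 2) =
      2 / v k * nk R m k - (\sum_(G : {set 'I_N} | #|G| == m) (k \in G)%:R * D G) / v k ^+ 2.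
    by rewrite /nk mulr_sumr mulr_suml -sumrB; apply: eq_bigr => G _; ring.
  apply: le_trans S4; rewrite e2.
  have hvk := hv k.
  have hv2 : 0 <= (v k ^+ 2)^-1 by rewrite invr_ge0 exprn_ge0 // ltW.
  have := ler_wpM2r hv2 S3.
  rewrite nkE.
  have e3 : gamma * T * v k / v k ^+ 2 = gamma * T / v k by field; exact: lt0r_neq0.
  rewrite e3; lra.
rewrite /green_prob /spike_entropy -/T.
have eL : \sum_(G : {set 'I_N} | #|G| == m) \sum_(k in G) wm_dist p alpha G k =
    \sum_(k < N) alpha * p k * \sum_(G : {set 'I_N} | #|G| == m) (k \in G)%:R / D G.
  rewrite (eq_bigr (fun G : {set 'I_N} => \sum_(k < N) (k \in G)%:R * (alpha * p k / D G))); last first.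
    move=> G _; rewrite big_mkcond /=; apply: eq_bigr => k _; rewrite /wm_dist hD.
    by case: (k \in G); rewrite /= ?mul1r ?mul0r.
  by rewrite exchange_big /=; apply: eq_bigr => k _; rewrite mulr_sumr; apply: eq_bigr => G _; ring.
have hg' : 0 < 1 + (alpha - 1) * gamma.
  have := mulr_gt0 hc hg0; lra.
have eR : gamma * alpha / (1 + (alpha - 1) * gamma) *
    \sum_(k < N) p k / (1 + (1 - gamma) * (alpha - 1) / (1 + (alpha - 1) * gamma) * p k) =
    \sum_(k < N) gamma * alpha * p k / v k.
  rewrite mulr_sumr; apply: eq_bigr => k _; rewrite /v.
  have hvk := hv k; rewrite /v in hvk.
  by field; rewrite (lt0r_neq0 hvk) (lt0r_neq0 hg').
rewrite eL eR ler_pdivlMr // mulr_suml; apply: ler_sum => k _.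
have hap : 0 <= alpha * p k by rewrite mulr_ge0 // ltW // (lt_trans _ ha1).
have := ler_wpM2l hap (key k).
have e : gamma * alpha * p k / v k * T = alpha * p k * (gamma * T / v k).
  by ring.
by rewrite e.
Qed.
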